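(* Let $n=p$ be prime, let $v\in\mathbb{R}^p$ have pairwise distinct coordinates, and let $C$ be the elementary symmetric curve associated to $v$. Let $\zeta=e^{2\pi i/p}$ and $w=(\zeta,\zeta^2,\dots,\zeta^p)$. Then the complex linear span of any irreducible component $C_0$ of $C$ contains $\sigma w$ for some $\sigma\in S_p$.
   Context: For $v=(c_1,\dots,c_n)$, the elementary symmetric curve associated to $v$ is the complex algebraic variety $C$ (in $\mathbb{C}^n$, viewed inside $\mathbb{P}^n_{\mathbb{C}}$) cut out by $e_k(x_1,\dots,x_n)=e_k(c_1,\dots,c_n)$ for $k=1,\dots,n-1$, where $e_k$ is the $k$-th elementary symmetric polynomial. $S_p$ acts on $\mathbb{C}^p$ by permuting coordinates: for $\epsilon\in S_p$, the $j$-th coordinate of $\epsilon x$ is $x_{\epsilon^{-1}(j)}$. *)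

(* Defs.v *)
From mathcomp Require Import all_boot all_order all_algebra all_fingroup.
From mathcomp Require Import reals trigo.
From mathcomp Require Import complex.
From mathcomp Require mpoly.
Set Implicit Arguments. Unset Strict Implicit. Unset Printing Implicit Defensive.
Import GRing.Theory Num.Theory.
Local Open Scope ring_scope.
Local Open Scope complex_scope.

Definition zclosed (R : realType) (p : nat) (S : ('I_p -> R[i]) -> Prop) : Prop :=
  exists F : mpoly.mpoly p R[i] -> Prop,
    forall x, S x <-> (forall f, F f -> mpoly.meval x f = 0).

Definition zirreducible (R : realType) (p : nat) (S : ('I_p -> R[i]) -> Prop) : Prop :=
  (exists x, S x) /\
  forall A B : ('I_p -> R[i]) -> Prop, zclosed A -> zclosed B ->
    (forall x, S x -> A x \/ B x) ->
    (forall x, S x -> A x) \/ (forall x, S x -> B x).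

Definition irr_component (R : realType) (p : nat)
    (X S : ('I_p -> R[i]) -> Prop) : Prop :=
  [/\ zclosed S, zirreducible S, (forall x, S x -> X x) &
      forall T, zclosed T -> zirreducible T -> (forall x, T x -> X x) ->
        (forall x, S x -> T x) -> forall x, T x -> S x].

Definition elem_sym_curve (R : realType) (p : nat) (v : 'I_p -> R)
    (x : 'I_p -> R[i]) : Prop :=
  forall k : nat, (1 <= k <= p.-1)%N ->
    mpoly.meval x (mpoly.mesym p R[i] k)
    = mpoly.meval (fun i => (v i)%:C) (mpoly.mesym p R[i] k).

Definition in_cspan (R : realType) (p : nat) (S : ('I_p -> R[i]) -> Prop)
    (u : 'I_p -> R[i]) : Prop :=
  exists (m : nat) (y : 'I_m -> ('I_p -> R[i])) (c : 'I_m -> R[i]),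
    (forall l, S (y l)) /\ forall j, u j = \sum_(l < m) c l * y l j.

Definition zeta (R : realType) (p : nat) : R[i] :=
  cos (2 * pi / p%:R) +i* sin (2 * pi / p%:R).

(* w = (zeta, zeta^2, ..., zeta^p); index j : 'I_p stands for coordinate j+1. *)
Definition wvec (R : realType) (p : nat) : 'I_p -> R[i] :=
  fun j => zeta R p ^+ j.+1.

Definition perm_act (T : Type) (p : nat) (s : 'S_p) (x : 'I_p -> T) : 'I_p -> T :=
  fun j => x ((s^-1)%g j).
Arguments zeta : clear implicits.
Arguments wvec : clear implicits.

(* Main.v *)
Require Import Defs.
From mathcomp Require Import all_boot all_order all_algebra all_fingroup.
From mathcomp Require Import reals trigo.
From mathcomp Require Import complex.
From mathcomp Require Import mpoly zify ring lra.
From Stdlib Require Import Classical ClassicalEpsilon FunctionalExtensionality.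
Set Implicit Arguments. Unset Strict Implicit. Unset Printing Implicit Defensive.
Import GRing.Theory Num.Theory.
Local Open Scope ring_scope.

Section Gen.
Variables (K : numClosedFieldType) (n : nat).
Notation pt := ('I_n -> K).
Notation MP := {mpoly K[n]}.

Definition pa (s : 'S_n) (x : pt) : pt := fun j => x ((s^-1)%g j).

Lemma meval_msym (x : pt) (t : 'S_n) (g : MP) :
  meval x (msym t g) = meval (fun i => x (t i)) g.
Proof.
have -> : msym t g = g \mPo [tuple 'X_(t i) | i < n].
  rewrite /msym /comp_mpoly; congr mmap.
  by apply: functional_extensionality => i; rewrite tnth_mktuple.
rewrite comp_mpoly_meval; apply: meval_eq => i.
by rewrite tnth_mktuple mevalXU.
Qed.

Lemma meval_pa (s : 'S_n) x g : meval (pa s x) g = meval x (msym (s^-1)%g g).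
Proof. by rewrite meval_msym. Qed.

Lemma pa1 x : pa 1 x = x.
Proof. by apply: functional_extensionality => j; rewrite /pa invg1 perm1. Qed.

Lemma paM s t x : pa s (pa t x) = pa (t * s)%g x.
Proof. by apply: functional_extensionality => j; rewrite /pa invMg permM. Qed.

Definition es k (x : pt) := meval x (mesym n K k).

Lemma es_pa k s x : es k (pa s x) = es k x.
Proof. by rewrite /es meval_pa (issymP _ (mesym_sym n K k)). Qed.


Definition tup (x : pt) : n.-tuple K := [tuple x i | i < n].
Definition charp (x : pt) : {poly K} := \prod_(c <- tup x) ('X - c%:P).

Lemma size_charp x : size (charp x) = n.+1.
Proof. by rewrite /charp size_prod_XsubC size_tuple. Qed.

Lemma charp_coef x k : (k <= n)%N -> (charp x)`_(n - k) = (-1)^+k * es k x.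
Proof.
move=> kn; have := mroots_coeff (tup x) (inord k); rewrite inordK ?ltnS //.
move=> ->; congr (_ * _); apply: meval_eq => i; by rewrite tnth_mktuple.
Qed.

Lemma es0 x : es 0 x = 1.
Proof. by rewrite /es mesym0E meval1. Qed.

Definition inC (c : pt) (x : pt) := forall k, (1 <= k <= n.-1)%N -> es k x = es k c.

Lemma charp_eq x y : (forall k, (k <= n)%N -> es k x = es k y) -> charp x = charp y.
Proof.
move=> H; apply/polyP => j.
case: (leqP j n) => jn.
  by rewrite -(subKn jn) !charp_coef ?leq_subr // H // leq_subr.
by rewrite !nth_default // size_charp.
Qed.

Lemma fibre (c x y : pt) : inC c x -> inC c y -> es n x = es n y ->
  exists s : 'S_n, y = pa s x.
Proof.
move=> Cx Cy exy.
have : charp y = charp x.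
  apply: charp_eq => k kn.
  case: k kn => [|k] kn; first by rewrite !es0.
  case: (ltnP k.+1 n) => kn'.
    have hk : (1 <= k.+1 <= n.-1)%N by apply/andP; split => //; lia.
    by rewrite Cx ?Cy.
  by have -> : k.+1 = n by apply/eqP; rewrite eqn_leq kn kn'.
move/prod_XsubC_eq/tuple_permP => [p hp].
exists (p^-1)%g; apply: functional_extensionality => j.
have := congr1 (fun s : seq K => nth 0 s j) hp.
rewrite /= !(nth_map j) -?enumT ?size_enum_ord // nth_ord_enum tnth_mktuple.
by rewrite /pa invgK.
Qed.

Lemma fibre_exists (c : pt) (mu : K) : (0 < n)%N ->
  exists x, inC c x /\ es n x = mu.
Proof.
move=> n0.
pose P := charp c + ((-1)^+n * (mu - es n c))%:P.
have sP : size P = n.+1.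
  by rewrite /P size_addl ?size_charp // size_polyC; case: (_ != 0).
have lP : lead_coef P = 1.
  rewrite lead_coefE sP /P coefD coefC /= -{1}(subn0 n) charp_coef //.
  by rewrite es0 mulr1 expr0 (gtn_eqF n0) addr0.
have [r hr] := closed_field_poly_normal P.
rewrite lP scale1r in hr.
have sr : size r == n by rewrite -eqSS -sP hr size_prod_XsubC.
pose rt : n.-tuple K := Tuple sr.
exists (tnth rt).
have cP : charp (tnth rt) = P.
  have E : [seq tnth rt i | i <- enum 'I_n] = r := map_tnth_enum rt.
  by rewrite hr /charp /tup /= E.
have key : forall k, (k <= n)%N -> (-1)^+k * es k (tnth rt) =
    (-1)^+k * es k c + (if k == n then (-1)^+n * (mu - es n c) else 0).
  move=> k kn; rewrite -charp_coef // cP /P coefD coefC -charp_coef //.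
  by rewrite subn_eq0 (_ : (n <= k)%N = (k == n)) // eqn_leq kn.
split.
  move=> k /andP [k1 kn]; have kn' : (k < n)%N by lia.
  have := key k (ltnW kn'); rewrite (ltn_eqF kn') addr0.
  by move/mulrI; apply; rewrite unitrX // unitrN1.
have := key n (leqnn n); rewrite eqxx -mulrDr addrC subrK.
by move/mulrI; apply; rewrite unitrX // unitrN1.
Qed.

Lemma avoid (s : seq K) : exists a : K, a \notin s.
Proof.
pose L := [seq (i%:R : K) | i <- iota 0 (size s).+1].
have uL : uniq L.
  rewrite map_inj_uniq ?iota_uniq // => i j /eqP; by rewrite eqr_nat => /eqP.
have : ~~ all (fun a => a \in s) L.
  apply/negP => /allP H; have := uniq_leq_size uL H.
  by rewrite size_map size_iota ltnn.
by case/allPn => a _ ha; exists a.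
Qed.

Lemma roots_list (Q : {poly K}) : Q != 0 ->
  exists rs : seq K, forall u, u \notin rs -> Q.[u] != 0.
Proof.
move=> Q0; have [r hr] := closed_field_poly_normal Q.
exists r => u ur; rewrite hr hornerZ horner_prod mulf_neq0 ?lead_coef_eq0 //.
rewrite prodf_seq_neq0; apply/allP => z zr; rewrite hornerXsubC subr_eq0.
by apply/implyP => _; apply: contraNneq ur => ->.
Qed.


End Gen.


Section Gen2.
Variables (K : numClosedFieldType) (n : nat).
Notation pt := ('I_n -> K).
Notation MP := {mpoly K[n]}.
Notation pa := (@pa K n).
Notation es := (@es K n).
Notation inC := (@inC K n).

Lemma coef_prod_morph (R S : comNzRingType) (f : {rmorphism R -> S}) (I : finType) (a : I -> R) j :
  f ((\prod_i ('X - (a i)%:P))`_j) = (\prod_i ('X - (f (a i))%:P))`_j.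
Proof. by rewrite -coef_map map_prod_XsubC. Qed.

Lemma prod_reindex (R : comNzRingType) (I : finType) (h : I -> I) (hi : injective h)
   (a b : I -> R) j : (forall t, b t = a (h t)) ->
  (\prod_(t : I) ('X - (b t)%:P))`_j = (\prod_t ('X - (a t)%:P))`_j.
Proof.
move=> hb; rewrite (eq_bigr (fun t => 'X - (a (h t))%:P)); last by move=> t _; rewrite hb.
by rewrite (reindex_inj (P := xpredT) (F := fun t => 'X - (a t)%:P) hi).
Qed.

Definition GP (g : MP) : {poly MP} := \prod_(t : 'S_n) ('X - (msym t g)%:P).

Lemma GP_sym g j : (GP g)`_j \is symmetric.
Proof.
apply/issymP => s.
rewrite /GP (coef_prod_morph (msym s)).
apply: (prod_reindex (mulIg s)) => t.
by rewrite msymMm.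
Qed.

Definition VP (x : pt) (g : MP) : {poly K} :=
  \prod_(t : 'S_n) ('X - (meval (pa t x) g)%:P).

Definition tj (g : MP) (j : nat) : MP := sval (sym_fundamental (GP_sym g j)).

Lemma tjP g j x : (VP x g)`_j = meval (fun i : 'I_n => es i.+1 x) (tj g j).
Proof.
have [h _] := svalP (sym_fundamental (GP_sym g j)).
have h2 := congr1 (meval x) h; rewrite comp_mpoly_meval in h2.
transitivity (meval x ((GP g)`_j)); last first.
  rewrite -h2 -/(tj g j); apply: meval_eq => i; by rewrite tnth_mktuple.
rewrite /GP (coef_prod_morph (meval x)).
symmetry; apply: (prod_reindex invg_inj) => t.
by rewrite meval_pa invgK.
Qed.

Lemma poly_of_meval (t : MP) (P : 'I_n -> {poly K}) :
  exists Q : {poly K}, forall u, Q.[u] = meval (fun i => (P i).[u]) t.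
Proof.
exists (\sum_(m <- msupp t) t@_m *: \prod_i (P i) ^+ (m i)) => u.
rewrite mevalE horner_sum; apply: eq_bigr => m _.
by rewrite hornerZ horner_prod; congr (_ * _); apply: eq_bigr => i _; rewrite horner_exp.
Qed.

Section Count.
Variables (I : finType) (v : I -> K).
Let P := \prod_(i : I) ('X - (v i)%:P).
Let z := #|[pred i | v i == 0]|.

Lemma count_split : P = 'X^z * \prod_(i | v i != 0) ('X - (v i)%:P).
Proof.
rewrite /P (bigID (fun i => v i == 0)) /=; congr (_ * _).
rewrite (eq_bigr (fun _ => 'X)); last by move=> i /eqP ->; rewrite subr0.
by rewrite prodr_const.
Qed.

Lemma count_low j : (j < z)%N -> P`_j = 0.
Proof. by move=> jz; rewrite count_split coefXnM jz. Qed.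

Lemma count_at : P`_z != 0.
Proof.
rewrite count_split coefXnM ltnn subnn -horner_coef0 horner_prod.
apply/prodf_neq0 => i vi; by rewrite hornerXsubC sub0r oppr_eq0.
Qed.
End Count.

Definition cnt (g : MP) (x : pt) := #|[pred t : 'S_n | meval (pa t x) g == 0]|.

Lemma VP_low g x j : (j < cnt g x)%N -> (VP x g)`_j = 0.
Proof. exact: count_low. Qed.

Lemma VP_at g x : (VP x g)`_(cnt g x) != 0.
Proof. exact: count_at. Qed.

Section Generic.
Variable c : pt.

Definition Pc (i : 'I_n) : {poly K} := if i.+1 == n then 'X else (es i.+1 c)%:P.

Lemma VP_curve g j : exists Q : {poly K}, forall y, inC c y ->
  (VP y g)`_j = Q.[es n y].
Proof.
have [Q hQ] := poly_of_meval (tj g j) Pc.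
exists Q => y Cy; rewrite tjP hQ; apply: meval_eq => i.
rewrite /Pc; case: eqP => [e|ne]; first by rewrite hornerX e.
rewrite hornerC Cy //; have := ltn_ord i; lia.
Qed.

End Generic.

End Gen2.


Lemma ex_min_nat (P : nat -> Prop) : (exists k, P k) ->
  exists m, P m /\ forall k, P k -> (m <= k)%N.
Proof.
move=> [k Pk]; apply: NNPP => H.
suff : forall m j, (j <= m)%N -> ~ P j by move/(_ k k (leqnn k)).
elim=> [|m IH] j jm.
  rewrite leqn0 in jm; move/eqP: jm => -> P0; apply: H; exists 0%N; split => // i _.
case: (leqP j m) => [jm'|mj]; first exact: IH.
have -> : j = m.+1 by apply/eqP; rewrite eqn_leq jm mj.
move=> Pm; apply: H; exists m.+1; split => // i Pi.
by case: (leqP m.+1 i) => // im; have := IH i (im : (i <= m)%N).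
Qed.

Section Gen3.
Variables (K : numClosedFieldType) (n : nat).
Notation pt := ('I_n -> K).
Notation MP := {mpoly K[n]}.
Notation pa := (@pa K n).
Notation es := (@es K n).
Notation inC := (@inC K n).
Notation cnt := (@cnt K n).
Notation VP := (@VP K n).

Lemma inC_refl c : inC c c.
Proof. by []. Qed.

Lemma gen_count (c : pt) (g : MP) : exists r, exists E : seq K,
  (forall x, inC c x -> (r <= cnt g x)%N) /\
  (forall x, inC c x -> es n x \notin E -> cnt g x = r).
Proof.
have QP : forall j, exists Q : {poly K}, forall y, inC c y -> (VP y g)`_j = Q.[es n y].
  by move=> j; apply: VP_curve.
have [Qf hQf] : exists Qf : nat -> {poly K}, forall j y, inC c y -> (VP y g)`_j = (Qf j).[es n y].
  exists (fun j => proj1_sig (constructive_indefinite_description _ (QP j))).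
  by move=> j; case: (constructive_indefinite_description _ (QP j)).
have ex : exists j, Qf j != 0.
  exists (cnt g c); apply/eqP => Q0; have := VP_at g c.
  by rewrite (hQf _ _ (inC_refl c)) Q0 horner0 eqxx.
case: (ex_minnP ex) => r Hr Hmin.
have [rs hrs] := roots_list Hr.
exists r, rs; split.
  move=> x Cx; apply: Hmin; apply/eqP => Q0; have := VP_at g x.
  by rewrite (hQf _ _ Cx) Q0 horner0 eqxx.
move=> x Cx xE; apply/eqP; rewrite eqn_leq; apply/andP; split; last first.
  apply: Hmin; apply/eqP => Q0; have := VP_at g x.
  by rewrite (hQf _ _ Cx) Q0 horner0 eqxx.
case: (leqP (cnt g x) r) => // lt.
have := VP_low lt; rewrite (hQf _ _ Cx) => h0.
by have := hrs _ xE; rewrite h0 eqxx.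
Qed.

Lemma perturb (x : pt) (g h : MP) : exists a : K, forall t : 'S_n,
  meval (pa t x) (g + a *: h) = 0 -> meval (pa t x) g = 0 /\ meval (pa t x) h = 0.
Proof.
pose bad := [seq - meval (pa t x) g / meval (pa t x) h | t <- enum 'S_n].
have [a ha] := avoid bad.
exists a => t; rewrite mevalD mevalZ => e.
case: (eqVneq (meval (pa t x) h) 0) => H0.
  by move: e; rewrite H0 mulr0 addr0.
exfalso; move/negP: ha; apply.
have -> : a = - meval (pa t x) g / meval (pa t x) h.
  have E : a * meval (pa t x) h = - meval (pa t x) g by apply/eqP; rewrite -addr_eq0 addrC e.
  by rewrite -E mulfK.
by apply/mapP; exists t => //; rewrite mem_enum.
Qed.

Lemma cnt_lt (g g' : MP) (x : pt) (t0 : 'S_n) :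
  (forall t, meval (pa t x) g' = 0 -> meval (pa t x) g = 0) ->
  meval (pa t0 x) g = 0 -> meval (pa t0 x) g' != 0 -> (cnt g' x < cnt g x)%N.
Proof.
move=> H z nz; apply: proper_card; apply/properP; split.
  by apply/subsetP => t; rewrite !inE => /eqP /H ->.
by exists t0; rewrite !inE ?z ?eqxx //.
Qed.

Lemma cnt_pos (g : MP) (x : pt) : meval x g = 0 -> (0 < cnt g x)%N.
Proof.
move=> z; apply/card_gt0P; exists 1%g; by rewrite inE pa1 z.
Qed.

End Gen3.


Section Gen4.
Variables (K : numClosedFieldType) (n : nat).
Notation pt := ('I_n -> K).
Notation MP := {mpoly K[n]}.
Notation pa := (@pa K n).
Notation es := (@es K n).
Notation inC := (@inC K n).
Notation cnt := (@cnt K n).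
Notation VP := (@VP K n).

Definition zcl (Y : pt -> Prop) :=
  exists F : MP -> Prop, forall x, Y x <-> (forall f, F f -> meval x f = 0).
Definition Iid (Y : pt -> Prop) (f : MP) := forall y, Y y -> meval y f = 0.
Definition cl (S : pt -> Prop) (x : pt) := forall f, Iid S f -> meval x f = 0.
Definition infi (Y : pt -> Prop) := forall s : seq K, exists y, Y y /\ es n y \notin s.
Definition irr (Y : pt -> Prop) := (exists x, Y x) /\
  forall A B, zcl A -> zcl B -> (forall x, Y x -> A x \/ B x) ->
    (forall x, Y x -> A x) \/ (forall x, Y x -> B x).

Lemma zcl_cl S : zcl (cl S).
Proof. by exists (Iid S). Qed.

Lemma sub_cl (S : pt -> Prop) x : S x -> cl S x.
Proof. by move=> Sx f If; apply: If. Qed.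

Lemma cl_min (S Y : pt -> Prop) : zcl Y -> (forall x, S x -> Y x) ->
  forall x, cl S x -> Y x.
Proof.
move=> [F hF] SY x clx; apply/hF => f Ff; apply: clx => y Sy.
by move/hF: (SY y Sy); apply.
Qed.

Lemma zcl_I A B : zcl A -> zcl B -> zcl (fun x => A x /\ B x).
Proof.
move=> [FA hA] [FB hB]; exists (fun f => FA f \/ FB f) => x; split.
  by move=> [/hA a /hB b] f [/a|/b].
by move=> H; split; [apply/hA => f Ff; apply: H; left | apply/hB => f Ff; apply: H; right].
Qed.

Lemma zcl_out Y y : zcl Y -> ~ Y y -> exists f, Iid Y f /\ meval y f != 0.
Proof.
move=> [F hF] nY.
case: (classic (exists f, Iid Y f /\ meval y f != 0)) => // H; exfalso.
apply: nY; apply/hF => f Ff; apply/eqP; case: (boolP (meval y f == 0)) => // nz.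
exfalso; apply: H; exists f; split => //.
by move=> z /hF; apply.
Qed.

Lemma Iid_comb Y g h a : Iid Y g -> Iid Y h -> Iid Y (g + a *: h).
Proof. by move=> Ig Ih y Yy; rewrite mevalD mevalZ Ig // Ih // mulr0 addr0. Qed.

Lemma Iid0 Y : Iid Y 0.
Proof. by move=> y _; rewrite meval0. Qed.

Lemma infi_split (Y A B : pt -> Prop) : infi Y -> (forall x, Y x -> A x \/ B x) ->
  infi (fun x => A x /\ Y x) \/ infi (fun x => B x /\ Y x).
Proof.
move=> iY cov.
case: (classic (infi (fun x => A x /\ Y x))) => [hA|nA]; [by left|right].
move=> s; case: (classic (exists y, (B y /\ Y y) /\ es n y \notin s)) => // nb.
exfalso.
have [sA hA] : exists sA : seq K, forall y : pt, A y /\ Y y -> es n y \in sA.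
  case: (classic (exists sA : seq K, forall y : pt, A y /\ Y y -> es n y \in sA)) => // nex.
  exfalso; apply: nA => sA.
  case: (classic (exists y, (A y /\ Y y) /\ es n y \notin sA)) => // ny.
  exfalso; apply: nex; exists sA => y Ay.
  case: (boolP (es n y \in sA)) => // hy; exfalso; apply: ny; exists y; by split.
have [y [Yy]] := iY (sA ++ s); rewrite mem_cat negb_or => /andP [h1 h2].
case: (cov y Yy) => [Ay|By]; first by rewrite hA in h1.
by apply: nb; exists y.
Qed.

Section Curve.
Variable c : pt.
Hypothesis n0 : (0 < n)%N.

Definition subC (Y : pt -> Prop) := forall y, Y y -> inC c y.

Definition good (Y : pt -> Prop) g := [/\ zcl Y, subC Y, infi Y & Iid Y g].
Definition Rg g r := (forall x, inC c x -> (r <= cnt g x)%N) /\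
  exists E : seq K, forall x, inC c x -> es n x \notin E -> cnt g x = r.

Lemma zcl_C : zcl (inC c).
Proof.
exists (fun f => exists2 k, (1 <= k <= n.-1)%N & f = mesym n K k - (es k c)%:MP) => x.
split.
  by move=> Cx f [k hk ->]; rewrite mevalB mevalC -/(es k x) Cx // subrr.
move=> H k hk; apply/eqP; rewrite -subr_eq0; apply/eqP.
by have := H _ (ex_intro2 _ _ k hk erefl); rewrite mevalB mevalC.
Qed.

Lemma infi_C : infi (inC c).
Proof.
move=> s; have [mu hmu] := avoid s; have [x [Cx ex]] := fibre_exists c mu n0.
by exists x; rewrite ex.
Qed.

Lemma good_C : good (inC c) 0.
Proof. split => //; [exact: zcl_C | exact: infi_C | exact: Iid0]. Qed.

End Curve.
End Gen4.


Section Gen5.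
Variables (K : numClosedFieldType) (n : nat).
Notation pt := ('I_n -> K).
Notation MP := {mpoly K[n]}.
Notation pa := (@pa K n).
Notation es := (@es K n).
Notation inC := (@inC K n).
Notation cnt := (@cnt K n).
Notation VP := (@VP K n).
Notation zcl := (@zcl K n).
Notation Iid := (@Iid K n).
Notation cl := (@cl K n).
Notation infi := (@infi K n).
Notation irr := (@irr K n).

Variable c : pt.
Hypothesis n0 : (0 < n)%N.
Notation subC := (@subC K n c).
Notation good := (@good K n c).
Notation Rg := (@Rg K n c).

Lemma exists_irr : exists D : pt -> Prop, [/\ zcl D, irr D, subC D & infi D].
Proof.
pose P (m : nat) := exists (Y : pt -> Prop) (g : MP), good Y g /\ Rg g m.
have [M [[Y0 [g0 [[zY0 sY0 iY0 Ig0] [RM [E0 hE0]]]]] Mmin]] : exists m, P m /\ forall k, P k -> (m <= k)%N.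
  apply: ex_min_nat; have [r [E [h1 h2]]] := gen_count c (0 : MP).
  exists r, (inC c), 0; split; first exact: good_C.
  by split => //; exists E.
pose S0 := fun y : pt => Y0 y /\ es n y \notin E0.
pose D := cl S0.
have DY : forall x, D x -> Y0 x by apply: cl_min => // x [].
have key : forall Z : pt -> Prop, zcl Z -> (forall x, Z x -> D x) -> infi Z ->
    forall y, S0 y -> Z y.
  move=> Z zZ ZD iZ y [Yy yE]; apply: NNPP => nZ.
  have [f [If fy]] := zcl_out zZ nZ.
  have [a ha] := perturb y g0 f.
  pose g' := g0 + a *: f.
  have Ig' : Iid Z g'.
    by apply: Iid_comb => // z Zz; apply: Ig0; apply: DY; apply: ZD.
  have [r' [E' [h1 h2]]] := gen_count c g'.
  have Pr' : P r'.
    exists Z, g'; split; last by split => //; exists E'.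
    by split => // z Zz; apply: sY0; apply: DY; apply: ZD.
  have Mr := Mmin _ Pr'.
  have Cy : inC c y by apply: sY0.
  have := h1 y Cy; have := hE0 y Cy yE.
  have lt : (cnt g' y < cnt g0 y)%N.
    apply: (@cnt_lt _ _ _ _ _ 1%g).
    - by move=> t /ha [].
    - by rewrite pa1; apply: Ig0.
    - by apply/eqP => /ha []; rewrite pa1 => _ /eqP; apply/negP.
  move=> E1 E2; move: lt; rewrite E1; move: Mr E2; lia.
exists D; split.
- exact: zcl_cl.
- split.
    have [y [Yy yE]] := iY0 E0; exists y; exact: sub_cl.
  move=> A B zA zB cov.
  have iD : infi D.
    move=> s; have [y [Yy yE]] := iY0 (s ++ E0); exists y.
    move: yE; rewrite mem_cat negb_or => /andP [h1 h2]; split => //.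
    exact: sub_cl.
  have [iA|iB] := infi_split iD cov.
  + left; apply: cl_min => // y Sy.
    have := key (fun x => A x /\ D x) (zcl_I zA (zcl_cl S0)) (fun x (h : _ /\ _) => proj2 h) iA y Sy.
    by case.
  + right; apply: cl_min => // y Sy.
    have := key (fun x => B x /\ D x) (zcl_I zB (zcl_cl S0)) (fun x (h : _ /\ _) => proj2 h) iB y Sy.
    by case.
- by move=> y Dy; apply: sY0; apply: DY.
- move=> s; have [y [Yy yE]] := iY0 (s ++ E0); exists y.
  move: yE; rewrite mem_cat negb_or => /andP [h1 h2]; split => //.
  exact: sub_cl.
Qed.


Lemma meets_fibre (Z : pt -> Prop) : zcl Z -> subC Z -> infi Z ->
  forall x0, inC c x0 -> exists s : 'S_n, Z (pa s x0).
Proof.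
move=> zZ sZ iZ x0 Cx0; apply: NNPP => H.
have nZ : forall s : 'S_n, ~ Z (pa s x0) by move=> s Zs; apply: H; exists s.
pose Q (m : nat) := exists g : MP, Iid Z g /\ cnt g x0 = m.
have [m [[g [Ig cg]] mmin]] : exists m, Q m /\ forall k, Q k -> (m <= k)%N.
  by apply: ex_min_nat; exists (cnt 0 x0), 0; split => //; apply: Iid0.
case: m cg mmin => [|m] cg mmin.
  have [r [E [h1 h2]]] := gen_count c g.
  have [y [Zy yE]] := iZ E.
  have := h2 y (sZ y Zy) yE; have := h1 x0 Cx0; rewrite cg leqn0 => /eqP ->.
  by have := cnt_pos (Ig y Zy) => /[swap] ->.
have : (0 < cnt g x0)%N by rewrite cg.
case/card_gt0P => t; rewrite inE => /eqP gt.
have [f [If ft]] := zcl_out zZ (nZ t).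
have [a ha] := perturb x0 g f.
have lt : (cnt (g + a *: f) x0 < cnt g x0)%N.
  apply: (@cnt_lt _ _ _ _ _ t) => //.
  - by move=> t' /ha [].
  - by apply/eqP => /ha [] _ /eqP; apply/negP.
have := mmin _ (ex_intro _ (g + a *: f) (conj (Iid_comb a Ig If) erefl)).
by rewrite -cg; move: lt; lia.
Qed.

Definition tr (s : 'S_n) (Z : pt -> Prop) : pt -> Prop := fun y => Z (pa s y).

Lemma pa_inv s x : pa s (pa (s^-1)%g x) = x.
Proof. by rewrite paM mulVg pa1. Qed.

Lemma pa_inv' s x : pa (s^-1)%g (pa s x) = x.
Proof. by rewrite paM mulgV pa1. Qed.

Lemma zcl_tr s Z : zcl Z -> zcl (tr s Z).
Proof.
move=> [F hF]; exists (fun f' => exists2 f, F f & f' = msym (s^-1)%g f) => y.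
rewrite /tr hF; split.
  by move=> H f' [f Ff ->]; rewrite -meval_pa; apply: H.
by move=> H f Ff; rewrite meval_pa; apply: H; exists f.
Qed.

Lemma irr_tr s Z : irr Z -> irr (tr s Z).
Proof.
move=> [[x Zx] iZ]; split.
  by exists (pa (s^-1)%g x); rewrite /tr pa_inv.
move=> A B zA zB cov.
have := iZ (tr (s^-1)%g A) (tr (s^-1)%g B) (zcl_tr _ zA) (zcl_tr _ zB).
case.
- by move=> z Zz; apply: cov; rewrite /tr pa_inv.
- by move=> H; left => y Zy; have := H _ Zy; rewrite /tr pa_inv'.
- by move=> H; right => y Zy; have := H _ Zy; rewrite /tr pa_inv'.
Qed.

Lemma inC_pa s x : inC c (pa s x) -> inC c x.
Proof. by move=> H k hk; rewrite -(es_pa k s x) H. Qed.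

Lemma subC_tr s Z : subC Z -> subC (tr s Z).
Proof. by move=> H y Zy; apply: (inC_pa (s := s)); apply: H. Qed.

Lemma infi_tr s Z : infi Z -> infi (tr s Z).
Proof.
move=> H l; have [y [Zy yl]] := H l; exists (pa (s^-1)%g y).
by rewrite /tr pa_inv es_pa.
Qed.

Lemma through_point x0 : inC c x0 ->
  exists T : pt -> Prop, [/\ zcl T, irr T, subC T, infi T & T x0].
Proof.
move=> Cx0; have [D [zD iD sD fD]] := exists_irr.
have [s Ds] := meets_fibre zD sD fD Cx0.
exists (tr s D); split => //.
- exact: zcl_tr.
- exact: irr_tr.
- exact: subC_tr.
- exact: infi_tr.
Qed.

End Gen5.


Section Gen6.
Variables (K : numClosedFieldType) (n : nat).
Notation pt := ('I_n -> K).
Notation MP := {mpoly K[n]}.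
Notation pa := (@pa K n).
Notation es := (@es K n).
Notation inC := (@inC K n).
Notation cnt := (@cnt K n).
Notation VP := (@VP K n).
Notation zcl := (@zcl K n).
Notation Iid := (@Iid K n).
Notation cl := (@cl K n).
Notation infi := (@infi K n).
Notation irr := (@irr K n).

Variable c : pt.
Hypothesis n0 : (0 < n)%N.
Notation subC := (@subC K n c).

Lemma comp_infi (C0 : pt -> Prop) : zcl C0 -> irr C0 -> subC C0 ->
  (forall T, zcl T -> irr T -> subC T -> (forall x, C0 x -> T x) -> forall x, T x -> C0 x) ->
  infi C0.
Proof.
move=> zC0 [[x0 Cx0] iC0] sC0 mx.
case: (classic (infi C0)) => // ni; exfalso.
have [s hs] : exists s : seq K, forall y : pt, C0 y -> es n y \in s.
  case: (classic (exists s : seq K, forall y : pt, C0 y -> es n y \in s)) => // nex.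
  exfalso; apply: ni => s.
  case: (classic (exists y : pt, C0 y /\ es n y \notin s)) => // ny.
  exfalso; apply: nex; exists s => y Cy.
  case: (boolP (es n y \in s)) => // hy; exfalso; apply: ny; exists y; by split.
pose gB : MP := (\prod_(mu <- s | mu != es n x0) (mesym n K n - mu%:MP)) *
  \prod_(t : 'S_n) \prod_(i | x0 i != pa t x0 i) ('X_i - (pa t x0 i)%:MP).
have evB : forall y, meval y gB = (\prod_(mu <- s | mu != es n x0) (es n y - mu)) *
    \prod_(t : 'S_n) \prod_(i | x0 i != pa t x0 i) (y i - pa t x0 i).
  move=> y; rewrite /gB mevalM !rmorph_prod /=; congr (_ * _).
    by apply: eq_bigr => mu _; rewrite mevalB mevalC.
  apply: eq_bigr => t _; rewrite rmorph_prod /=; apply: eq_bigr => i _.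
  by rewrite mevalB mevalC mevalXU.
have single : forall y, C0 y -> y = x0.
  have zA : zcl (fun y : pt => y = x0).
    exists (fun f : MP => exists i, f = 'X_i - (x0 i)%:MP) => y; split.
      by move=> -> f [i ->]; rewrite mevalB mevalC mevalXU subrr.
    move=> H; apply: functional_extensionality => i; apply/eqP; rewrite -subr_eq0.
    by have := H _ (ex_intro _ i erefl); rewrite mevalB mevalC mevalXU => ->.
  have zB : zcl (fun y : pt => meval y gB = 0).
    by exists (fun f => f = gB) => y; split; [move=> H f -> | apply].
  have cov : forall y, C0 y -> y = x0 \/ meval y gB = 0.
    move=> y Cy; case: (classic (y = x0)) => [->|ne]; [by left|right].
    rewrite evB; apply/eqP; rewrite mulf_eq0; apply/orP.
    case: (eqVneq (es n y) (es n x0)) => e.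
      right; have [t yt] := fibre (sC0 x0 Cx0) (sC0 y Cy) (esym e).
      apply/prodf_eq0; exists t => //; apply/prodf_eq0.
      have [i hi] : exists i, x0 i != pa t x0 i.
        apply: NNPP => H; apply: ne; rewrite yt; apply: functional_extensionality => i.
        by apply/eqP; rewrite eq_sym; apply/negPn/negP => h; apply: H; exists i.
      by exists i => //; rewrite yt subrr.
    left; rewrite prodf_seq_eq0; apply/hasP; exists (es n y); first exact: hs.
    by rewrite e subrr eqxx.
  case: (iC0 _ _ zA zB cov) => // H; exfalso.
  have := H x0 Cx0; rewrite evB => /eqP; rewrite mulf_eq0 => /orP [].
    rewrite prodf_seq_eq0 => /hasP [mu _ /andP [ne /eqP]].
    by move/eqP; rewrite subr_eq0 eq_sym (negPf ne).
  case/prodf_eq0 => t _ /prodf_eq0 [i ne /eqP]; move/eqP; rewrite subr_eq0.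
  by rewrite (negPf ne).
have [T [zT iT sT fT Tx0]] := through_point n0 (sC0 x0 Cx0).
have CT : forall x, C0 x -> T x by move=> x /single ->.
have TC := mx T zT iT sT CT.
have [y [Ty ny]] := fT [:: es n x0].
by move: ny; rewrite (single y (TC y Ty)) mem_seq1 eqxx.
Qed.


Definition sc (u : K) (y : pt) : pt := fun i => u * y i.

Lemma es_sc u y k : es k (sc u y) = u ^+ k * es k y.
Proof.
rewrite /es /mesym !rmorph_sum /= mulr_sumr; apply: eq_bigr => h /eqP hk.
rewrite !rmorph_prod /= -hk -prodrMl; apply: eq_bigr => i _.
by rewrite !mevalXU.
Qed.

Definition lin (b : 'I_n -> K) : MP := \sum_i b i *: 'X_i.

Lemma meval_lin b y : meval y (lin b) = \sum_i b i * y i.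
Proof. by rewrite /lin rmorph_sum /=; apply: eq_bigr => i _; rewrite mevalZ mevalXU. Qed.

Lemma lin_sc b u y : meval (sc u y) (lin b) = u * meval y (lin b).
Proof.
rewrite !meval_lin mulr_sumr; apply: eq_bigr => i _; by rewrite /sc mulrCA.
Qed.

Lemma VP0 y g : (VP y g)`_0 = 0 <-> exists t, meval (pa t y) g = 0.
Proof.
rewrite -horner_coef0 /VP horner_prod; split.
  move/eqP/prodf_eq0 => [t _]; rewrite hornerXsubC sub0r oppr_eq0 => /eqP h.
  by exists t.
move=> [t ht]; apply/eqP/prodf_eq0; exists t => //.
by rewrite hornerXsubC ht subrr.
Qed.

Lemma final_step (C0 : pt -> Prop) (W : pt) (b : 'I_n -> K) :
  subC C0 -> infi C0 -> (forall k, (1 <= k <= n.-1)%N -> es k W = 0) ->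
  (forall y, C0 y -> meval y (lin b) = 0) -> exists t, meval (pa t W) (lin b) = 0.
Proof.
move=> sC0 iC0 hW hl; set l := lin b.
have [Q hQ] := VP_curve c l 0.
have Q0 : Q = 0.
  apply/eqP; case: (boolP (Q == 0)) => // nQ; exfalso.
  have [rs hrs] := roots_list nQ.
  have [y [Cy yr]] := iC0 rs.
  have := hrs _ yr; rewrite -hQ; last exact: sC0.
  have -> : (VP y l)`_0 = 0 by apply/VP0; exists 1%g; rewrite pa1; apply: hl.
  by rewrite eqxx.
have all0 : forall y, inC c y -> exists t, meval (pa t y) l = 0.
  by move=> y Cy; apply/VP0; rewrite hQ // Q0 horner0.
pose Ph (i : 'I_n) : {poly K} := if i.+1 == n then (es n W)%:P else es i.+1 c *: 'X^(i.+1).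
have [h hh] := poly_of_meval (tj l 0) Ph.
have hu : forall u, u != 0 -> h.[u] = 0.
  move=> u u0.
  have [y [Cy ey]] := fibre_exists c (es n W / u ^+ n) n0.
  have [t ht] := all0 y Cy.
  have : (VP (sc u y) l)`_0 = 0.
    apply/VP0; exists t.
    have -> : pa t (sc u y) = sc u (pa t y) by [].
    by rewrite lin_sc ht mulr0.
  rewrite tjP hh => <-; apply: meval_eq => i.
  rewrite /Ph es_sc; case: eqP => e.
    by rewrite hornerC e ey mulrC divfK // expf_neq0.
  rewrite hornerZ hornerXn Cy; first by rewrite mulrC.
  have := ltn_ord i; lia.
have h0 : h = 0.
  apply/eqP; case: (boolP (h == 0)) => // nh; exfalso.
  have [rs hrs] := roots_list nh.
  have [u hu'] := avoid (0 :: rs).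
  move: hu'; rewrite inE negb_or => /andP [u0 ur].
  by have := hrs _ ur; rewrite hu // eqxx.
apply/VP0; rewrite tjP.
have E := hh 0; rewrite h0 horner0 in E; rewrite [RHS]E; apply: meval_eq => i.
rewrite /Ph; case: eqP => e; first by rewrite hornerC e.
rewrite hornerZ hornerXn expr0n /= mulr0 hW //; have := ltn_ord i; lia.
Qed.

End Gen6.


Section Gen7.
Variables (K : numClosedFieldType) (n : nat).
Notation pt := ('I_n -> K).
Notation MP := {mpoly K[n]}.
Notation lin := (@lin K n).

Definition in_span (C0 : pt -> Prop) (u : pt) :=
  exists (m : nat) (y : 'I_m -> pt) (cc : 'I_m -> K),
    (forall l, C0 (y l)) /\ forall j, u j = \sum_(l < m) cc l * y l j.

Definition rowv (y : pt) : 'rV[K]_n := \row_i y i.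
Definition Mf m (f : 'I_m -> pt) : 'M[K]_(m, n) := \matrix_(l, i) f l i.

Lemma separate (C0 : pt -> Prop) (I : finType) (w : I -> pt) :
  (forall s, ~ in_span C0 (w s)) ->
  exists b : 'I_n -> K, (forall y, C0 y -> meval y (lin b) = 0) /\
     forall s, meval (w s) (lin b) != 0.
Proof.
move=> nw.
pose P (r : nat) := exists m (f : 'I_m -> pt), (forall l, C0 (f l)) /\ \rank (Mf f) = r.
pose Q (k : nat) := exists r, P r /\ k = (n - r)%N.
have [k0 [[r0 [[m [f [Cf rf]]] ->]] kmin]] : exists k, Q k /\ forall k', Q k' -> (k <= k')%N.
  pose f0 := fun l : 'I_0 => (fun _ : 'I_n => (0 : K)%R).
  apply: ex_min_nat; exists (n - \rank (Mf f0))%N.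
  by exists (\rank (Mf f0)); split => //; exists 0%N, f0; split => // [[]].
have r0n : (r0 <= n)%N by rewrite -rf rank_leq_col.
have rmax : forall r, P r -> (r <= r0)%N.
  move=> r Pr; have := kmin (n - r)%N (ex_intro _ r (conj Pr erefl)).
  have : (r <= n)%N by case: Pr => m' [f' [_ <-]]; rewrite rank_leq_col.
  lia.
have sub : forall y, C0 y -> (rowv y <= Mf f)%MS.
  move=> y Cy.
  pose f' : 'I_(m + 1) -> pt := fun l => match split l with inl l' => f l' | inr _ => y end.
  have ef : Mf f' = col_mx (Mf f) (rowv y).
    apply/matrixP => l i; rewrite /Mf /f' /rowv !mxE.
    by case: (split l) => a; rewrite !mxE.
  have AB : (Mf f <= col_mx (Mf f) (rowv y))%MS by rewrite -addsmxE addsmxSl.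
  have rB : (\rank (col_mx (Mf f) (rowv y)) <= \rank (Mf f))%N.
    rewrite -ef rf; apply: rmax; exists (m + 1)%N, f'; split => //.
    by move=> l; rewrite /f'; case: (split l).
  have e : (Mf f == col_mx (Mf f) (rowv y))%MS.
    by rewrite -(mxrank_leqif_eq AB).2 eqn_leq rB (mxrank_leqif_eq AB).1.
  by case/andP: e => _; rewrite col_mx_sub => /andP [].
pose Kc := cokermx (Mf f).
have hC : forall y, C0 y -> rowv y *m Kc = 0.
  by move=> y /sub; rewrite submxE => /eqP.
have hW : forall s, rowv (w s) *m Kc != 0.
  move=> s; rewrite -submxE; apply/negP => /submxP [D hD]; apply: (nw s).
  exists m, f, (fun l => D 0 l); split => // j.
  have := congr1 (fun M : 'rV_n => M 0 j) hD; rewrite /= !mxE => ->.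
  by apply: eq_bigr => l _; rewrite !mxE.
pose Ps (s : I) : {poly K} := \sum_(j < n) ((rowv (w s) *m Kc) 0 j) *: 'X^j.
have Psnz : forall s, Ps s != 0.
  move=> s; set r := rowv (w s) *m Kc.
  have [j0 hj] : exists j0, r 0 j0 != 0.
    case: (classic (exists j0, r 0 j0 != 0)) => // H; exfalso.
    move/eqP: (hW s); apply; apply/matrixP => i j; rewrite (ord1 i) [in RHS]mxE; apply/eqP.
    case: (boolP (r 0 j == 0)) => // nz; exfalso; apply: H; exists j; exact: nz.
  apply/eqP => P0; have := congr1 (fun p : {poly K} => p`_j0) P0.
  rewrite coef0 /Ps coef_sum (bigD1 j0) //= coefZ coefXn eqxx mulr1 big1 ?addr0.
    by move=> e; rewrite e eqxx in hj.
  move=> j nj; rewrite coefZ coefXn (_ : (j0 == j :> nat) = false) ?mulr0 //.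
  by apply/negbTE; rewrite eq_sym; exact: nj.
pose Pi := \prod_(s : I) Ps s.
have Pinz : Pi != 0 by apply/prodf_neq0 => s _; exact: Psnz s.
have [rs hrs] := roots_list Pinz.
have [t ht] := avoid rs.
have Pst : forall s, (Ps s).[t] != 0.
  by move=> s; have := hrs t ht; rewrite horner_prod => /prodf_neq0; apply.
pose a : 'cV[K]_n := \col_j t ^+ j.
exists (fun i => (Kc *m a) i 0).
have ev : forall y, meval y (lin (fun i => (Kc *m a) i 0)) = ((rowv y *m Kc) *m a) 0 0.
  move=> y; rewrite meval_lin -mulmxA [in RHS]mxE; apply: eq_bigr => i _.
  rewrite mulrC; congr (_ * _); by rewrite mxE.
split.
  by move=> y Cy; rewrite ev hC // mul0mx mxE.
move=> s; rewrite ev.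
have -> : ((rowv (w s) *m Kc) *m a) 0 0 = (Ps s).[t].
  rewrite mxE /Ps horner_sum; apply: eq_bigr => j _.
  by rewrite hornerZ hornerXn; congr (_ * _); rewrite mxE.
exact: Pst.
Qed.

End Gen7.


Unset Implicit Arguments.
Import Order.TTheory.

Section Zeta.
Variables (R : realType) (p : nat).
Hypothesis pp : prime p.

Local Open Scope complex_scope.

Lemma mulC' (a b c d : R) : ((a +i* b) * (c +i* d) : R[i]) = (a*c - b*d) +i* (a*d + b*c).
Proof. by []. Qed.

Let th := 2 * pi / (p%:R : R).

Lemma zeta_pow k : zeta R p ^+ k = cos (k%:R * th) +i* sin (k%:R * th).
Proof.
elim: k => [|k IH]; first by rewrite expr0 mul0r cos0 sin0.
rewrite exprS IH /zeta -/th mulC' -[k.+1]addn1 natrD mulrDl mul1r addrC cosD sinD.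
by congr (_ +i* _); ring.
Qed.

Lemma p_gt0 : (0 < p)%N. Proof. exact: prime_gt0. Qed.

Lemma zeta_p : zeta R p ^+ p = 1.
Proof.
rewrite zeta_pow /th mulrC divfK ?pnatr_eq0 -?lt0n ?p_gt0 //.
by rewrite mulr_natl cos2pi sin2pi.
Qed.

Lemma zeta_neq1 : zeta R p != 1.
Proof.
apply/negP; rewrite /zeta eq_complex /= => /andP [/eqP c1 /eqP s0].
have p2 : (2 <= p)%N by apply: prime_gt1.
case: (ltngtP p 2) => [|p3|e]; first by rewrite ltnNge p2.
  have : 0 < sin (2 * pi / (p%:R : R)); last by rewrite s0 ltxx.
  apply: sin_gt0_pi; apply/andP; split.
    by rewrite divr_gt0 // ?mulr_gt0 ?pi_gt0 // ltr0n p_gt0.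
  rewrite ltr_pdivrMr ?ltr0n ?p_gt0 //.
  rewrite mulrC ltr_pM2l ?pi_gt0 //.
  by rewrite ltr_nat.
move: c1; rewrite e (_ : 2 * pi / 2%:R = pi :> R); last by rewrite [2 * _]mulrC mulfK // pnatr_eq0.
rewrite cospi => h; lra.
Qed.

Lemma zeta_prim : p.-primitive_root (zeta R p).
Proof.
have [m pm mp] := prim_order_exists p_gt0 zeta_p.
have [m1|mp'] : m = 1%N \/ m = p.
  by case/primeP: pp => _ /(_ m mp) /orP [] /eqP; [left|right].
  2: by rewrite mp' in pm.
move: pm; rewrite m1 => pm; have := prim_expr_order pm; rewrite expr1 => h.
by move: zeta_neq1; rewrite h eqxx.
Qed.

End Zeta.

Lemma esW (R : realType) (p : nat) (pp : prime p) k : (1 <= k <= p.-1)%N ->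
  es k (wvec R p) = 0.
Proof.
move=> hk.
have hc : charp (wvec R p) = 'X^p - 1.
  rewrite /charp big_tuple.
  rewrite (eq_bigr (fun i : 'I_p => 'X - ((zeta R p) ^+ i.+1)%:P)); last first.
    by move=> i _; rewrite tnth_mktuple.
  rewrite -(factor_Xn_sub_1 (@zeta_prim R p pp)) big_mkord.
  have zp := @zeta_p R p pp.
  move: (zeta R p) zp => z; case: (p) => [|p'] zp; first by rewrite !big_ord0.
  rewrite big_ord_recr big_ord_recl /= mulrC; congr (_ * _).
    by rewrite zp expr0.
have kp : (k <= p)%N by move: hk; lia.
have := charp_coef (wvec R p) kp; rewrite hc coefB coefXn coef1.
have -> : (p - k == p)%N = false by apply/negbTE; move: hk; lia.
have -> : (p - k == 0)%N = false by apply/negbTE; move: hk; lia.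
rewrite subrr => /esym /eqP; rewrite mulf_eq0 signr_eq0 /= => /eqP //.
Qed.

Theorem corollary3p5 (R : realType) (p : nat) (v : 'I_p -> R)
  (C0 : ('I_p -> R[i]) -> Prop) :
  prime p ->
  injective v ->
  irr_component (elem_sym_curve v) C0 ->
  exists s : 'S_p, in_cspan C0 (perm_act s (wvec R p)).
Proof.
move=> pp _ [zC0 irC0 subC0 maxC0].
have n0 : (0 < p)%N := prime_gt0 pp.
pose c : 'I_p -> R[i] := fun i => (v i)%:C%C.
have iC0 : infi C0 := @comp_infi R[i] p c n0 C0 zC0 irC0 subC0 maxC0.
apply: NNPP => H.
have nw : forall s : 'S_p, ~ in_span C0 (pa s (wvec R p)).
  by move=> s hs; apply: H; exists s.
have [b [hb hbs]] := separate nw.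
have [t ht] := @final_step R[i] p c n0 C0 (wvec R p) b subC0 iC0 (@esW R p pp) hb.
by move/eqP: (hbs t).
Qed.
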